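(* Let $R$ be a type $(1,1)$ tensor on $E$ with $R(dt)=0$ and $\widetilde{R}$ its complete lift to $J^1\tau^*$. The adjoint action of $\widetilde{R}$ on 1-forms on $J^1\tau^*$ is fully determined by $\widetilde{R}(\pi^*\alpha)=\pi^*(R(\alpha))$ for all 1-forms $\alpha$ on $E$, and $\widetilde{R}(dF_X)=dF_{R(X)}-(\mathcal{L}_XR)^h$ for all $X\in\mathcal{X}^V(E)$.
   Context: Setting: $\tau:E\to\mathbb{R}$, $\dim E=n+1$, adapted coordinates $(t,q^i)$, allowed changes $t\mapsto t$, $q\mapsto Q(t,q)$; $J^1\tau^*=T^*E/\langle dt\rangle$, projection $\pi:J^1\tau^*\to E$, coordinates $(t,q^i,p_i)$ (class of $p_idq^i$). $\mathcal{X}^V(E)$: vector fields with $\langle X,dt\rangle=0$. $(1,1)$ tensors act on 1-forms by $\langle R(X),\alpha\rangle=\langle X,R(\alpha)\rangle$; locally $R=R^i_j\partial_{q^i}\otimes dq^j+R^i_0\partial_{q^i}\otimes dt$. For $X=X^i\partial_{q^i}\in\mathcal{X}^V(E)$: $F_X=p_iX^i$ (i.e. $F_X(m)=\langle X_{\pi(m)},m\rangle$). Horizontal lift of a $(1,1)$ tensor $S$ on $E$ with $S(dt)=0$: the 1-form $S^h$ on $J^1\tau^*$ with $S^h_m=S_{\pi(m)}(m)$, in coordinates $S^h=p_iS^i_jdq^j+p_iS^i_0dt$. (Note $(\mathcal{L}_XR)(dt)=0$ for vertical $X$.) Complete lift $\widetilde{R}$: in coordinates $\widetilde{R}=R^i_j(\partial_{q^i}\otimes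 dq^j+\partial_{p_j}\otimes dp_i)+R^i_0\partial_{q^i}\otimes dt+p_i(\frac{\partial R^i_j}{\partial q^k}-\frac{\partial R^i_k}{\partial q^j})\partial_{p_j}\otimes dq^k+p_i(\frac{\partial R^i_k}{\partial t}-\frac{\partial R^i_0}{\partial q^k})\partial_{p_k}\otimes dt$. *)

(* Defs.v *)
(* Local-coordinate model of tau : E -> R
   on an adapted chart: points of E are rows x : 'rV[R]_(n.+1), coordinate
   index ord0 is t, index (lift ord0 i) is q^i.  Points of J^1 tau^* are pairs
   (x, p) with p : 'rV[R]_n the fibre coordinates p_i. *)
From HB Require Import structures.
From mathcomp Require Import all_boot all_order all_algebra.
From mathcomp Require Import all_classical all_reals all_analysis.
Set Implicit Arguments. Unset Strict Implicit. Unset Printing Implicit Defensive.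
Import Order.TTheory GRing.Theory Num.Theory.
Import numFieldNormedType.Exports.
Local Open Scope classical_set_scope.
Local Open Scope ring_scope.

Section Defs.
Variables (R : realType) (n : nat).

Notation ptE := (matrix R 1 n.+1) (only parsing).
Notation ptJ := (matrix R 1 n.+1 * matrix R 1 n)%type (only parsing).
Definition Eidx := 'I_(n.+1).
Definition Jidx := ('I_(n.+1) + 'I_n)%type. (* inl a = x^a, inr i = p_i   *)
Definition tE : Eidx := ord0.
Definition qE (i : 'I_n) : Eidx := lift ord0 i.

(* fields on E: functions, vector fields (components X^a), 1-forms (alpha_a),
   (1,1) tensors (T a b = coefficient of d/dx^a (x) dx^b) *)
Definition funE := ptE -> R.
Definition vfE := Eidx -> funE.
Definition formE := Eidx -> funE.
Definition tensorE := Eidx -> Eidx -> funE.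
Definition funJ := ptJ -> R.
Definition formJ := Jidx -> funJ.
Definition tensorJ := Jidx -> Jidx -> funJ.

Definition partialE (a : Eidx) (f : funE) (x : ptE) : R :=
  derive1 (fun s : R => f (x + s *: delta_mx 0 a)) 0.
Definition partialJ (b : Jidx) (F : funJ) (m : ptJ) : R :=
  match b with
  | inl a => derive1 (fun s : R => F (m.1 + s *: delta_mx 0 a, m.2)) 0
  | inr i => derive1 (fun s : R => F (m.1, m.2 + s *: delta_mx 0 i)) 0
  end.
Definition dJ (F : funJ) : formJ := fun b m => partialJ b F m.

Fixpoint smooth_on_k (k : nat) (U : set ptE) (f : funE) : Prop :=
  match k with
  | 0 => forall x, U x -> differentiable f x
  | k.+1 => (forall x, U x -> differentiable f x) /\
            forall a, smooth_on_k k U (partialE a f)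
  end.
Definition smooth_on (U : set ptE) (f : funE) := forall k, smooth_on_k k U f.

Definition pairE (X : vfE) (al : formE) (x : ptE) : R :=
  \sum_(a < n.+1) X a x * al a x.
Definition dtE : formE := fun a _ => if a == tE then 1 else 0.
Definition vertical_on (U : set ptE) (X : vfE) :=
  forall x, U x -> pairE X dtE x = 0.
(* action on 1-forms: <X, T(alpha)> = <T(X), alpha> *)
Definition actE (T : tensorE) (al : formE) : formE :=
  fun b x => \sum_(a < n.+1) al a x * T a b x.
Definition actV (T : tensorE) (X : vfE) : vfE :=
  fun a x => \sum_(b < n.+1) T a b x * X b x.
Definition actJ (S : tensorJ) (be : formJ) : formJ :=
  fun b m => \sum_(a : Jidx) be a m * S a b m.

(* Lie bracket, and Lie derivative of a (1,1) tensor: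
   (L_X T)(Y) = [X, T Y] - T [X, Y], components via coordinate fields *)
Definition coordVF (b : Eidx) : vfE := fun a _ => if a == b then 1 else 0.
Definition bracket (X Y : vfE) : vfE :=
  fun a x => \sum_(c < n.+1)
     (X c x * partialE c (Y a) x - Y c x * partialE c (X a) x).
Definition LieT (X : vfE) (T : tensorE) : tensorE :=
  fun a b x => bracket X (actV T (coordVF b)) a x
             - actV T (bracket X (coordVF b)) a x.

(* the covector on E represented by m in J^1 tau^* (class of p_i dq^i) *)
Definition covE (m : ptJ) : Eidx -> R :=
  fun a => match unlift ord0 a with Some i => m.2 0 i | None => 0 end.

(* F_X(m) = < X_{pi(m)}, m > *)
Definition F (X : vfE) : funJ :=
  fun m => \sum_(a < n.+1) X a m.1 * covE m a.

Definition pullJ (al : formE) : formJ :=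
  fun b m => match b with inl a => al a m.1 | inr _ => 0 end.

(* horizontal lift: S^h_m = S_{pi(m)}(m), as a 1-form on J^1 tau^* *)
Definition hlift (S : tensorE) : formJ :=
  fun b m => match b with
             | inl b' => \sum_(a < n.+1) covE m a * S a b' m.1
             | inr _ => 0 end.

(* complete lift, by its coordinate expression *)
Definition clift (T : tensorE) : tensorJ :=
  fun a b m =>
  let x := m.1 in let p := fun i => m.2 0 i in
  match a, b with
  | inl a', inl b' =>      (* R^i_j d_{q^i} (x) dq^j  and  R^i_0 d_{q^i} (x) dt *)
      if unlift ord0 a' is Some _ then T a' b' x else 0
  | inr j, inr i => T (qE i) (qE j) x   (* R^i_j d_{p_j} (x) dp_i *)
  | inr j, inl b' =>
      match unlift ord0 b' with
      | Some k =>   (* p_i (d_k R^i_j - d_j R^i_k) d_{p_j} (x) dq^k *)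
          \sum_(i < n) p i * (partialE (qE k) (T (qE i) (qE j)) x
                              - partialE (qE j) (T (qE i) (qE k)) x)
      | None =>     (* p_i (d_t R^i_j - d_j R^i_0) d_{p_j} (x) dt *)
          \sum_(i < n) p i * (partialE tE (T (qE i) (qE j)) x
                              - partialE (qE j) (T (qE i) tE) x)
      end
  | inl _, inr _ => 0
  end.

End Defs.

(* Main.v *)
Set Warnings "-all".
Require Import Defs.
From HB Require Import structures.
From mathcomp Require Import all_boot all_order all_algebra.
From mathcomp Require Import all_classical all_reals all_analysis.
Import Order.TTheory GRing.Theory Num.Theory.
Import numFieldNormedType.Exports.
From mathcomp Require Import ring.
Local Open Scope classical_set_scope.
Local Open Scope ring_scope.

Lemma partialE_D (R : realType) n (a : Eidx n) (f : funE R n) x :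
  partialE a f x = 'D_(delta_mx 0 a) f x.
Proof.
rewrite /partialE derive1E /derive.
f_equal. f_equal. apply/funext => h /=.
rewrite /shift /= scale0r addr0 [_ + x]addrC.
by rewrite addr0 -[h%:A]/(h * 1) mulr1.
Qed.

Lemma derivable_sumM (R : realType) (V : normedModType R) k
  (g h : 'I_k -> V -> R) x v :
  (forall j, derivable (g j) x v) -> (forall j, derivable (h j) x v) ->
  derivable (fun y => \sum_(j < k) g j y * h j y) x v.
Proof.
move=> dg dh.
have -> : (fun y => \sum_(j < k) g j y * h j y) = \sum_(j < k) (g j * h j).
  by rewrite fct_sumE.
by apply: derivable_sum => j; apply: derivableM.
Qed.

Lemma D_sumM (R : realType) (V : normedModType R) k
  (g h : 'I_k -> V -> R) x v :
  (forall j, derivable (g j) x v) -> (forall j, derivable (h j) x v) ->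
  'D_v (fun y => \sum_(j < k) g j y * h j y) x =
  \sum_(j < k) ('D_v (g j) x * h j x + g j x * 'D_v (h j) x).
Proof.
move=> dg dh.
have -> : (fun y => \sum_(j < k) g j y * h j y) = \sum_(j < k) (g j * h j).
  by rewrite fct_sumE.
rewrite derive_sum; last by move=> j; apply: derivableM.
apply: eq_bigr => j _; rewrite deriveM //= /GRing.scale /=.
by rewrite addrC mulrC.
Qed.

Lemma derivable_cst' (R : realType) (V : normedModType R) (c : R) (x v : V) :
  derivable (fun _ : V => c) x v.
Proof. exact: derivable_cst. Qed.

Lemma D_cst' (R : realType) (V : normedModType R) (c : R) (x v : V) :
  'D_v (fun _ : V => c) x = 0.
Proof. exact: derive_cst. Qed.

Lemma D_sumC (R : realType) (V : normedModType R) k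
  (g : 'I_k -> V -> R) (c : 'I_k -> R) x v :
  (forall j, derivable (g j) x v) ->
  'D_v (fun y => \sum_(j < k) g j y * c j) x =
  \sum_(j < k) 'D_v (g j) x * c j.
Proof.
move=> dg; rewrite (@D_sumM _ _ _ g (fun j _ => c j)) //.
  by apply: eq_bigr => j _; rewrite D_cst' mulr0 addr0.
Qed.

Lemma derive1_affine (R : realType) (A B : R) :
  derive1 (fun s : R => A + s * B) 0 = B.
Proof.
rewrite derive1E deriveD //= derive_cst add0r deriveM //= derive_id.
by rewrite scale0r add0r /GRing.scale /= mulr1.
Qed.

Lemma diffU (R : realType) n (U : set 'rV[R]_(n.+1)) (f : funE R n) x :
  smooth_on U f -> U x -> differentiable f x.
Proof. by move=> H; apply: (H 0%N). Qed.

Lemma covE0 (R : realType) n (m : 'rV[R]_(n.+1) * 'rV[R]_n) : covE m ord0 = 0.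
Proof. by rewrite /covE unlift_none. Qed.

Lemma covEq (R : realType) n (m : 'rV[R]_(n.+1) * 'rV[R]_n) j :
  covE m (lift ord0 j) = m.2 0 j.
Proof. by rewrite /covE liftK. Qed.

Lemma FE (R : realType) n (X : vfE R n) m :
  F X m = \sum_(j < n) X (qE j) m.1 * m.2 0 j.
Proof.
rewrite /F big_ord_recl covE0 mulr0 add0r.
by apply: eq_bigr => j _; rewrite covEq.
Qed.

Lemma hliftE (R : realType) n (S : tensorE R n) b m :
  hlift S (inl b) m = \sum_(j < n) m.2 0 j * S (qE j) b m.1.
Proof.
rewrite /hlift big_ord_recl covE0 mul0r add0r.
by apply: eq_bigr => j _; rewrite covEq.
Qed.

Lemma dJFl (R : realType) n (X : vfE R n) b m :
  dJ (F X) (inl b) m = partialE b (fun y => \sum_(j < n) X (qE j) y * m.2 0 j) m.1.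
Proof.
rewrite /dJ /partialJ /partialE; congr derive1; apply/funext => s.
by rewrite FE.
Qed.

Lemma dJFr (R : realType) n (X : vfE R n) i m :
  dJ (F X) (inr i) m = X (qE i) m.1.
Proof.
rewrite /dJ /partialJ.
have -> : (fun s : R => F X (m.1, m.2 + s *: delta_mx 0 i)) =
          (fun s => F X m + s * X (qE i) m.1).
  apply/funext => s; rewrite !FE /=.
  rewrite (bigD1 i) //= [in RHS](bigD1 i) //=.
  rewrite !mxE !eqxx /= mulr1.
  rewrite [X in _ + X](eq_bigr (fun j => X (qE j) m.1 * m.2 0 j)); last first.
    move=> j ji; rewrite !mxE /=; case: eqP => [E|_]; [by move: ji; rewrite E eqxx|by rewrite mulr0 addr0].
  by rewrite mulrDr addrAC [X _ _ * s]mulrC.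
exact: derive1_affine.
Qed.

Lemma actJE (R : realType) n (S : tensorJ R n) be b m :
  actJ S be b m = \sum_(a < n.+1) be (inl a) m * S (inl a) b m
                + \sum_(j < n) be (inr j) m * S (inr j) b m.
Proof. by rewrite /actJ big_sumType. Qed.

Lemma lift0_neq n (j : 'I_n) : (lift ord0 j == ord0 :> 'I_n.+1) = false.
Proof. by apply/negbTE; rewrite eq_sym neq_lift. Qed.

Lemma dtE_sum (R : realType) n (f : Eidx n -> R) x :
  \sum_(a < n.+1) f a * @dtE R n a x = f ord0.
Proof.
rewrite big_ord_recl big1 ?addr0.
  by rewrite /dtE /tE eqxx mulr1.
by move=> j _; rewrite /dtE /tE lift0_neq mulr0.
Qed.

Lemma dtE_sum' (R : realType) n (f : Eidx n -> R) x :
  \sum_(a < n.+1) @dtE R n a x * f a = f ord0.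
Proof. by rewrite -(@dtE_sum R n f x); apply: eq_bigr => a _; rewrite mulrC. Qed.

Lemma actV_coord (R : realType) n (T : tensorE R n) a b :
  actV T (coordVF b) a = T a b.
Proof.
apply/funext => x; rewrite /actV /coordVF (bigD1 b) //= eqxx mulr1 big1 ?addr0 //.
by move=> c /negbTE ->; rewrite mulr0.
Qed.

Lemma bracket_coord (R : realType) n (X : vfE R n) b c x :
  bracket X (coordVF b) c x = - partialE b (X c) x.
Proof.
rewrite /bracket (eq_bigr (fun d => - ((d == b)%:R * partialE d (X c) x))); last first.
  move=> d _; rewrite partialE_D /coordVF.
  rewrite D_cst' mulr0 sub0r; congr (- (_ * _)).
  by case: (d == b).
rewrite sumrN (bigD1 b) //= eqxx mul1r big1 ?addr0 //.
by move=> d /negbTE ->; rewrite mul0r.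
Qed.

Lemma LieTE (R : realType) n (X : vfE R n) (T : tensorE R n) a b x :
  LieT X T a b x =
  \sum_(c < n.+1) (X c x * partialE c (T a b) x - T c b x * partialE c (X a) x)
  + \sum_(c < n.+1) T a c x * partialE b (X c) x.
Proof.
rewrite /LieT (_ : actV T (coordVF b) = fun a => T a b); last by apply/funext => a'; rewrite actV_coord.
congr (_ + _).
rewrite /actV -sumrN; apply: eq_bigr => c _.
by rewrite bracket_coord mulrN opprK.
Qed.

Lemma clift_rl (R : realType) n (T : tensorE R n) j b m :
  clift T (inr j) (inl b) m =
  \sum_(i < n) m.2 0 i * (partialE b (T (qE i) (qE j)) m.1
                          - partialE (qE j) (T (qE i) b) m.1).
Proof. by rewrite /clift; case: unliftP => [k ->|->]. Qed.

Lemma clift_ll (R : realType) n (T : tensorE R n) a b m :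
  clift T (inl a) (inl b) m = if a == ord0 then 0 else T a b m.1.
Proof. by rewrite /clift; case: unliftP => [k ->|->]; rewrite ?eqxx // lift0_neq. Qed.

Lemma part1 (R : realType) n (U : set 'rV[R]_(n.+1)) (T : tensorE R n)
  (HT0 : forall b x, U x -> T ord0 b x = 0) (al : formE R n) b m :
  U m.1 -> actJ (clift T) (pullJ al) b m = pullJ (actE T al) b m.
Proof.
move=> Um; rewrite actJE [X in _ + X]big1 ?addr0; last by move=> j _; rewrite /= mul0r.
case: b => [b|i] /=.
  rewrite /actE big_ord_recl [in RHS]big_ord_recl unlift_none mulr0 HT0 // mulr0.
  congr (_ + _); apply: eq_bigr => j _; by rewrite liftK.
by rewrite big1 // => a _; rewrite mulr0.
Qed.

Lemma clift_lr (R : realType) n (T : tensorE R n) a i m :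
  clift T (inl a) (inr i) m = 0.
Proof. by []. Qed.

Lemma clift_rr (R : realType) n (T : tensorE R n) j i m :
  clift T (inr j) (inr i) m = T (qE i) (qE j) m.1.
Proof. by []. Qed.

Lemma hlift_r (R : realType) n (S : tensorE R n) i m :
  hlift S (inr i) m = 0.
Proof. by []. Qed.

Lemma clift_rlD (R : realType) n (T : tensorE R n) j b m :
  clift T (inr j) (inl b) m =
  \sum_(i < n) m.2 0 i * ('D_(delta_mx 0 b) (T (qE i) (qE j)) m.1
                          - 'D_(delta_mx 0 (qE j)) (T (qE i) b) m.1).
Proof. by rewrite clift_rl; apply: eq_bigr => i _; rewrite !partialE_D. Qed.

Lemma derivable_actV (R : realType) n (T : tensorE R n) (X : vfE R n) a x v :
  (forall b, derivable (T a b) x v) -> (forall b, derivable (X b) x v) ->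
  derivable (actV T X a) x v.
Proof. by move=> h1 h2; apply: derivable_sumM. Qed.

Lemma D_actV (R : realType) n (T : tensorE R n) (X : vfE R n) a x v :
  (forall b, derivable (T a b) x v) -> (forall b, derivable (X b) x v) ->
  'D_v (actV T X a) x =
  \sum_(c < n.+1) ('D_v (T a c) x * X c x + T a c x * 'D_v (X c) x).
Proof. by move=> h1 h2; apply: D_sumM. Qed.

Lemma LieTD (R : realType) n (X : vfE R n) (T : tensorE R n) a b x :
  LieT X T a b x =
  \sum_(c < n.+1) (X c x * 'D_(delta_mx 0 c) (T a b) x
                   - T c b x * 'D_(delta_mx 0 c) (X a) x)
  + \sum_(c < n.+1) T a c x * 'D_(delta_mx 0 b) (X c) x.
Proof.
rewrite LieTE; congr (_ + _); apply: eq_bigr => c _; by rewrite !partialE_D.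
Qed.

Lemma part2 (R : realType) n (U : set 'rV[R]_(n.+1)) (T : tensorE R n)
  (HT0 : forall b x, U x -> T ord0 b x = 0)
  (dT : forall a b x, U x -> differentiable (T a b) x)
  (X : vfE R n) (dX : forall a x, U x -> differentiable (X a) x)
  (HX0 : forall x, U x -> X ord0 x = 0) b m :
  U m.1 ->
  actJ (clift T) (dJ (F X)) b m = dJ (F (actV T X)) b m - hlift (LieT X T) b m.
Proof.
move=> Um; rewrite actJE.
case: b => [b|i]; last first.
  rewrite big1 ?add0r; last by move=> a _; rewrite clift_lr mulr0.
  rewrite dJFr hlift_r subr0 /actV big_ord_recl HX0 // mulr0 add0r.
  by apply: eq_bigr => j _; rewrite dJFr clift_rr mulrC.
have dX' : forall a k, derivable (X a) m.1 (delta_mx 0 k).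
  by move=> a k; apply: diff_derivable; apply: dX.
have dT' : forall a c k, derivable (T a c) m.1 (delta_mx 0 k).
  by move=> a c k; apply: diff_derivable; apply: dT.
rewrite big_ord_recl clift_ll eqxx mulr0 add0r.
rewrite [X in X + _](eq_bigr (fun k => (\sum_(i < n) 'D_(delta_mx 0 (qE k)) (X (qE i)) m.1 * m.2 0 i)
                      * T (qE k) b m.1)); last first.
  by move=> k _; rewrite clift_ll lift0_neq dJFl partialE_D D_sumC.
rewrite [X in _ + X](eq_bigr (fun j => X (qE j) m.1 * \sum_(i < n) m.2 0 i *
   ('D_(delta_mx 0 b) (T (qE i) (qE j)) m.1
     - 'D_(delta_mx 0 (qE j)) (T (qE i) b) m.1))); last first.
  by move=> j _; rewrite dJFr clift_rlD.
rewrite dJFl partialE_D D_sumC; last by move=> j; apply: derivable_actV.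
rewrite [X in X - _](eq_bigr (fun j => (\sum_(c < n.+1) ('D_(delta_mx 0 b) (T (qE j) c) m.1 * X c m.1
     + T (qE j) c m.1 * 'D_(delta_mx 0 b) (X c) m.1)) * m.2 0 j)); last first.
  by move=> j _; rewrite D_actV.
rewrite hliftE.
rewrite [X in _ - X](eq_bigr (fun j => m.2 0 j * (\sum_(c < n.+1) (X c m.1 * 'D_(delta_mx 0 c) (T (qE j) b) m.1
                   - T c b m.1 * 'D_(delta_mx 0 c) (X (qE j)) m.1)
  + \sum_(c < n.+1) T (qE j) c m.1 * 'D_(delta_mx 0 b) (X c) m.1))); last first.
  by move=> j _; rewrite LieTD.
set E := fun i j : 'I_n => m.2 0 i * ('D_(delta_mx 0 b) (T (qE i) (qE j)) m.1 * X (qE j) m.1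
   - X (qE j) m.1 * 'D_(delta_mx 0 (qE j)) (T (qE i) b) m.1
   + T (qE j) b m.1 * 'D_(delta_mx 0 (qE j)) (X (qE i)) m.1).
transitivity (\sum_(i < n) \sum_(j < n) E i j).
  rewrite [X in X + _](eq_bigr (fun k => \sum_(i < n) 'D_(delta_mx 0 (qE k)) (X (qE i)) m.1 * m.2 0 i * T (qE k) b m.1)); last by move=> k _; rewrite big_distrl.
  rewrite [X in _ + X](eq_bigr (fun j => \sum_(i < n) X (qE j) m.1 * (m.2 0 i *
   ('D_(delta_mx 0 b) (T (qE i) (qE j)) m.1
     - 'D_(delta_mx 0 (qE j)) (T (qE i) b) m.1)))); last by move=> k _; rewrite big_distrr.
  rewrite exchange_big [X in _ + X]exchange_big -big_split; apply: eq_bigr => i _.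
  rewrite -big_split; apply: eq_bigr => j _ /=; rewrite /E; ring.
rewrite -sumrB; apply: eq_bigr => i _.
rewrite -big_split big_distrl big_distrr -sumrB big_ord_recl /=.
rewrite HX0 // HT0 // [X in _ = X + _](_ : _ = 0); last by ring.
rewrite add0r; apply: eq_bigr => j _; rewrite /E /qE; ring.
Qed.

Lemma smooth_cst (R : realType) n (U : set 'rV[R]_(n.+1)) (c : R) :
  smooth_on U (fun _ => c).
Proof.
move=> k; elim: k c => [|k IH] c /=.
  by move=> x _; apply: differentiable_cst.
split; first by move=> x _; apply: differentiable_cst.
move=> a; have -> : partialE a (fun _ : 'rV[R]_(n.+1) => c) = (fun _ => 0).
  by apply/funext => x; rewrite partialE_D D_cst'.
exact: IH.
Qed.

Lemma actJ_pull_coord (R : realType) n (S : tensorJ R n) c b m :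
  actJ S (pullJ (@coordVF R n c)) b m = S (inl c) b m.
Proof.
rewrite actJE [X in _ + X]big1 ?addr0; last by move=> j _; rewrite mul0r.
rewrite (bigD1 c) //= /coordVF eqxx mul1r big1 ?addr0 //.
by move=> a /negbTE ->; rewrite mul0r.
Qed.

Lemma actJ_dF_coord (R : realType) n (S : tensorJ R n) j b m :
  actJ S (dJ (F (@coordVF R n (qE j)))) b m = S (inr j) b m.
Proof.
rewrite actJE big1 ?add0r; last first.
  move=> a _; rewrite dJFl partialE_D D_sumC; last by move=> i; apply: derivable_cst'.
  by rewrite big1 ?mul0r // => i _; rewrite D_cst' mul0r.
rewrite (bigD1 j) // dJFr /coordVF eqxx mul1r big1 => [|i ij]; first exact: addr0.
  rewrite dJFr /coordVF /qE (inj_eq (@lift_inj _ ord0)) (negbTE ij).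
by rewrite mul0r.
Qed.

Theorem proposition3 (R : realType) (n : nat) (U : set 'rV[R]_(n.+1))
  (T : tensorE R n) :
  open U ->
  (forall a b, smooth_on U (T a b)) ->
  (forall b x, U x -> actE T (@dtE R n) b x = 0) ->
  [/\ (* Rtilde(pi^* alpha) = pi^*(R alpha) *)
      (forall (al : formE R n) b (m : 'rV[R]_(n.+1) * 'rV[R]_n), U m.1 ->
         actJ (clift T) (pullJ al) b m = pullJ (actE T al) b m),
      (* Rtilde(dF_X) = dF_{R(X)} - (L_X R)^h *)
      (forall X : vfE R n, (forall a, smooth_on U (X a)) -> vertical_on U X ->
         forall b (m : 'rV[R]_(n.+1) * 'rV[R]_n), U m.1 ->
         actJ (clift T) (dJ (F X)) b m
           = dJ (F (actV T X)) b m - hlift (LieT X T) b m)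
    & (* these two identities determine the action of Rtilde on 1-forms *)
      (forall S : tensorJ R n,
         (forall (al : formE R n) b (m : 'rV[R]_(n.+1) * 'rV[R]_n), U m.1 ->
            actJ S (pullJ al) b m = pullJ (actE T al) b m) ->
         (forall X : vfE R n, (forall a, smooth_on U (X a)) -> vertical_on U X ->
            forall b (m : 'rV[R]_(n.+1) * 'rV[R]_n), U m.1 ->
            actJ S (dJ (F X)) b m
              = dJ (F (actV T X)) b m - hlift (LieT X T) b m) ->
         forall (be : formJ R n) b (m : 'rV[R]_(n.+1) * 'rV[R]_n), U m.1 ->
           actJ S be b m = actJ (clift T) be b m)].
Proof.
move=> _ sT hdt.
have HT0 : forall b x, U x -> T ord0 b x = 0.
  by move=> b x Ux; rewrite -(hdt b x Ux) /actE dtE_sum'.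
have dT : forall a b x, U x -> differentiable (T a b) x.
  by move=> a b x Ux; apply: diffU (sT a b) Ux.
have P1 := @part1 R n U T HT0.
have P2 : forall X : vfE R n, (forall a, smooth_on U (X a)) -> vertical_on U X ->
         forall b (m : 'rV[R]_(n.+1) * 'rV[R]_n), U m.1 ->
         actJ (clift T) (dJ (F X)) b m
           = dJ (F (actV T X)) b m - hlift (LieT X T) b m.
  move=> X sX vX b m Um; apply: (@part2 R n U T HT0 dT X) => //.
    by move=> a x Ux; apply: diffU (sX a) Ux.
  by move=> x Ux; rewrite -(vX x Ux) /pairE dtE_sum.
split => // S H1 H2 be b m Um.
rewrite /actJ; apply: eq_bigr => -[c|j] _; congr (_ * _).
  by rewrite -actJ_pull_coord H1 // -P1 // actJ_pull_coord.
have sX : forall a, smooth_on U (@coordVF R n (qE j) a).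
  by move=> a; apply: smooth_cst.
have vX : vertical_on U (@coordVF R n (qE j)).
  by move=> x _; rewrite /pairE dtE_sum /coordVF /qE eq_sym lift0_neq.
by rewrite -actJ_dF_coord H2 // -P2 // actJ_dF_coord.
Qed.
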